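(* For $d\in[6.74,7.5]$, $|\Psi_d'(x)|<1$ for all $x\in[\frac38,\frac12]$.
   Context: $\Psi_d=\dot\Psi\circ\hat\Psi$ with $\hat\Psi(x)=\frac{1-2x^{2}}{1-x^{2}}$ and $\dot\Psi(v)=\frac{1-v^{d-1}}{2-v^{d-1}}$ ($d$ real). *)

(* Defs.v *)
From Stdlib Require Import Reals.
From Coquelicot Require Import Coquelicot.
Open Scope R_scope.

Definition Psi_hat (x : R) : R := (1 - 2 * x ^ 2) / (1 - x ^ 2).

Definition Psi_dot (d v : R) : R :=
  (1 - Rpower v (d - 1)) / (2 - Rpower v (d - 1)).

Definition Psi (d x : R) : R := Psi_dot d (Psi_hat x).

(* Main.v *)
Require Import Defs.
From Stdlib Require Import Reals Lra Psatz.
From Coquelicot Require Import Coquelicot.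
Open Scope R_scope.

Lemma v_bounds x : 3/8 <= x <= 1/2 ->
  0 < Psi_hat x < 1.
Proof.
  intros Hx. unfold Psi_hat.
  assert (h1 : 0 < 1 - x^2) by nra. assert (h2 : 0 < 1 - 2*x^2) by nra.
  split. apply Rdiv_lt_0_compat; lra.
  replace ((1 - 2 * x ^ 2) / (1 - x ^ 2)) with (1 - x^2 / (1 - x^2)) by (field; lra).
  assert (0 < x^2 / (1 - x^2)) by (apply Rdiv_lt_0_compat; nra). lra.
Qed.

Lemma deriv_formula d x : 674/100 <= d <= 15/2 -> 3/8 <= x <= 1/2 ->
  is_derive (Psi d) x
   ((d-1) * Rpower (Psi_hat x) (d-1) * 2 * x /
     ((1 - 2*x^2) * (1 - x^2) * (2 - Rpower (Psi_hat x) (d-1))^2)).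
Proof.
  intros Hd Hx.
  assert (h1 : 0 < 1 - x^2) by nra. assert (h2 : 0 < 1 - 2*x^2) by nra.
  destruct (v_bounds x Hx) as [hv0 hv1].
  assert (hw1 : exp ((d-1) * ln (Psi_hat x)) < 1).
  { assert (ln (Psi_hat x) < 0). { rewrite <- ln_1. apply ln_increasing; lra. }
    assert (H0 : exp ((d-1) * ln (Psi_hat x)) < exp 0) by (apply exp_increasing; nra).
    rewrite exp_0 in H0. exact H0. }
  assert (hw0 : 0 < exp ((d-1) * ln (Psi_hat x))) by apply exp_pos.
  unfold Psi, Psi_dot, Rpower. unfold Psi_hat in *.
  set (v := (1 - 2 * x ^ 2) / (1 - x ^ 2)) in *.
  assert (ev : (1 + - (2 * (x * (x * 1)))) * / (1 + - (x * (x * 1))) = v).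
  { unfold v. field. nra. }
  auto_derive.
  - rewrite ev. repeat split; try lra.
  - rewrite ev. set (E := exp ((d - 1) * ln v)) in *.
    unfold v. field. repeat split; try lra.
Qed.

Lemma exp8 z : exp (8*z) = exp z ^ 8.
Proof.
  replace (8*z) with (z+z+z+z+z+z+z+z) by ring. rewrite !exp_plus. ring.
Qed.

Lemma ln_bound : ln (46/55) <= - (100/574).
Proof.
  set (z := 100/4592).
  assert (hz : exp (-z) >= 1 - z) by (pose proof (exp_ineq1_le (-z)); lra).
  assert (hp : exp z * exp (-z) = 1) by (rewrite <- exp_plus; replace (z + -z) with 0 by ring; apply exp_0).
  assert (hez : 0 < exp z) by apply exp_pos.
  assert (hz1 : exp z <= 4592/4492).
  { unfold z in *. nra. }
  assert (h8 : exp (100/574) <= 55/46).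
  { replace (100/574) with (8*z) by (unfold z; field). rewrite exp8.
    apply Rle_trans with ((4592/4492)^8). apply pow_incr. lra. lra. }
  replace (46/55) with (/ (55/46)) by field. rewrite ln_Rinv by lra.
  apply Ropp_le_contravar. rewrite <- (ln_exp (100/574)). apply ln_le. apply exp_pos. exact h8.
Qed.

Lemma pow_bound a v : 574/100 <= a -> 0 < v <= 46/55 ->
  a * exp (a * ln v) <= 574/100 * exp (574/100 * ln v).
Proof.
  intros ha hv.
  assert (hl : ln v <= - (100/574)).
  { apply Rle_trans with (ln (46/55)). apply ln_le; lra. apply ln_bound. }
  set (s := a - 574/100).
  assert (e : exp (a * ln v) = exp (574/100 * ln v) * exp (s * ln v)).
  { rewrite <- exp_plus. f_equal. unfold s. ring. }
  rewrite e.
  assert (hp : exp (s * ln v) * exp (- (s * ln v)) = 1) by (rewrite <- exp_plus; replace (s * ln v + - (s * ln v)) with 0 by ring; apply exp_0).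
  pose proof (exp_ineq1_le (- (s * ln v))).
  pose proof (exp_pos (574/100 * ln v)). pose proof (exp_pos (s * ln v)).
  assert (hs : 0 <= s) by (unfold s; lra).
  assert (h3 : a <= 574/100 * exp (- (s * ln v))).
  { unfold s in *. nra. }
  assert (h4 : a * exp (s * ln v) <= 574/100).
  { apply Rle_trans with (574/100 * exp (- (s * ln v)) * exp (s * ln v)).
    apply Rmult_le_compat_r; lra. nra. }
  nra.
Qed.

Lemma hat_mono x y : 3/8 <= x <= y -> y <= 1/2 -> Psi_hat y <= Psi_hat x.
Proof.
  intros H1 H2. unfold Psi_hat.
  assert (0 < 1 - x^2) by nra. assert (0 < 1 - y^2) by nra.
  replace ((1 - 2 * x ^ 2) / (1 - x ^ 2)) with (1 - x^2 / (1 - x^2)) by (field; lra).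
  replace ((1 - 2 * y ^ 2) / (1 - y ^ 2)) with (1 - y^2 / (1 - y^2)) by (field; lra).
  assert (x^2 / (1-x^2) <= y^2/(1-y^2)).
  { unfold Rdiv. apply Rmult_le_compat. nra. left; apply Rinv_0_lt_compat; lra. nra.
    apply Rinv_le_contravar; nra. }
  lra.
Qed.

Lemma cube_bound v vi c : 0 < v <= vi -> v <= 1 -> 0 < c -> vi^17 <= c^3 ->
  exp (574/100 * ln v) <= c.
Proof.
  intros hv hv1 hc hvc.
  assert (hl : ln v <= 0) by (rewrite <- ln_1; apply ln_le; lra).
  set (U := exp (17/3 * ln v)).
  assert (h1 : exp (574/100 * ln v) <= U).
  { unfold U. destruct (Req_dec (ln v) 0) as [e|e].
    rewrite e, !Rmult_0_r. lra. left. apply exp_increasing. nra. }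
  assert (h3 : U^3 = v^17).
  { rewrite <- (Rpower_pow 17 v) by lra. unfold Rpower, U.
    replace (INR 17) with (3 * (17/3)) by (simpl; field).
    replace (3 * (17/3) * ln v) with (17/3*ln v + 17/3*ln v + 17/3*ln v) by ring.
    rewrite !exp_plus. ring. }
  assert (h4 : v^17 <= vi^17) by (apply pow_incr; lra).
  assert (hU : 0 < U) by apply exp_pos.
  destruct (Rle_lt_dec U c). lra.
  assert (c*c < U*U) by nra.
  assert (c*c*c < U*U*U) by nra.
  assert (c^3 < U^3) by (simpl; lra). lra.
Qed.

Lemma gen a x xi xj c : 574/100 <= a <= 13/2 -> xi <= x <= xj -> 3/8 <= xi -> xj <= 1/2 ->
  Psi_hat xi ^17 <= c^3 -> 0 < c < 2 ->
  574/100*c*2*xj < (1-2*xj^2)*(1-xj^2)*(2-c)^2 ->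
  a * Rpower (Psi_hat x) a * 2 * x / ((1 - 2*x^2) * (1 - x^2) * (2 - Rpower (Psi_hat x) a)^2) < 1.
Proof.
  intros ha hx hi hj hc hc2 hfin.
  destruct (v_bounds x ltac:(lra)) as [hv0 hv1].
  assert (hvi : Psi_hat x <= Psi_hat xi) by (apply hat_mono; lra).
  assert (hv46 : Psi_hat x <= 46/55).
  { apply Rle_trans with (Psi_hat xi). lra.
    replace (46/55) with (Psi_hat (3/8)) by (unfold Psi_hat; field).
    apply hat_mono; lra. }
  set (v := Psi_hat x) in *.
  assert (hA : a * Rpower v a <= 574/100 * exp (574/100 * ln v)) by (apply pow_bound; lra).
  assert (hC : exp (574/100 * ln v) <= c) by (apply (cube_bound v (Psi_hat xi)); lra).
  assert (hl : ln v <= 0) by (rewrite <- ln_1; apply ln_le; lra).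
  assert (hB : Rpower v a <= exp (574/100 * ln v)).
  { unfold Rpower. destruct (Rle_lt_or_eq_dec (a*ln v) (574/100*ln v)) as [l|e]. nra.
    left. apply exp_increasing. exact l. rewrite e. lra. }
  assert (hw0 : 0 < Rpower v a) by apply exp_pos.
  set (w := Rpower v a) in *.
  assert (h1 : 0 < 1 - x^2) by nra. assert (h2 : 0 < 1 - 2*x^2) by nra.
  assert (hP : (1-2*xj^2)*(1-xj^2) <= (1-2*x^2)*(1-x^2)).
  { assert (x^2 <= xj^2) by nra. assert (xj^2 <= 1/4) by nra. assert (0 <= x^2) by nra.
    assert (0 <= (xj^2 - x^2) * (3 - 2*(x^2 + xj^2))) by (apply Rmult_le_pos; lra).
    nra. }
  assert (hW : (2-c)^2 <= (2-w)^2) by nra.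
  assert (hPj : 0 < (1-2*xj^2)*(1-xj^2)) by nra.
  assert (hD : 0 < (1 - 2*x^2) * (1 - x^2) * (2 - w)^2) by (apply Rmult_lt_0_compat; nra).
  apply (Rmult_lt_reg_r ((1 - 2*x^2) * (1 - x^2) * (2 - w)^2)); [exact hD|].
  unfold Rdiv. rewrite Rmult_assoc, Rinv_l, Rmult_1_r, Rmult_1_l by lra.
  assert (e1 : a * w * 2 * x <= 574/100 * c * 2 * xj).
  { assert (a * w <= 574/100 * c) by lra. nra. }
  assert (e2 : (1-2*xj^2)*(1-xj^2)*(2-c)^2 <= (1 - 2*x^2) * (1 - x^2) * (2 - w)^2).
  { apply Rmult_le_compat; nra. }
  lra.
Qed.

Theorem lemma4p3 (d x : R) :
  674/100 <= d <= 15/2 -> 3/8 <= x <= 1/2 ->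
  ex_derive (Psi d) x /\ Rabs (Derive (Psi d) x) < 1.
Proof.
  intros Hd Hx.
  pose proof (deriv_formula d x Hd Hx) as HD.
  split. eexists; exact HD.
  rewrite (is_derive_unique _ _ _ HD).
  destruct (v_bounds x Hx) as [hv0 hv1].
  assert (hw : 0 < Rpower (Psi_hat x) (d-1)) by apply exp_pos.
  assert (hw1 : Rpower (Psi_hat x) (d-1) < 1).
  { unfold Rpower. assert (ln (Psi_hat x) < 0). { rewrite <- ln_1. apply ln_increasing; lra. }
    assert (H0 : exp ((d-1) * ln (Psi_hat x)) < exp 0) by (apply exp_increasing; nra).
    rewrite exp_0 in H0. exact H0. }
  assert (h1 : 0 < 1 - x^2) by nra. assert (h2 : 0 < 1 - 2*x^2) by nra.
  rewrite Rabs_pos_eq.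
  2:{ apply Rlt_le, Rdiv_lt_0_compat. apply Rmult_lt_0_compat; [|lra].
      apply Rmult_lt_0_compat; [|lra]. apply Rmult_lt_0_compat; lra.
      apply Rmult_lt_0_compat. nra. apply pow_lt. lra. }
  assert (ha : 574/100 <= d - 1 <= 13/2) by lra.
  destruct (Rle_lt_dec x (49/128)).
  { apply (gen _ _ (3/8) (49/128) (73/200)); try lra; unfold Psi_hat; lra. }
  destruct (Rle_lt_dec x (25/64)).
  { apply (gen _ _ (49/128) (25/64) (69/200)); try lra; unfold Psi_hat; lra. }
  destruct (Rle_lt_dec x (13/32)).
  { apply (gen _ _ (25/64) (13/32) (163/500)); try lra; unfold Psi_hat; lra. }
  destruct (Rle_lt_dec x (7/16)).
  { apply (gen _ _ (13/32) (7/16) (289/1000)); try lra; unfold Psi_hat; lra. }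
  destruct (Rle_lt_dec x (15/32)).
  { apply (gen _ _ (7/16) (15/32) (109/500)); try lra; unfold Psi_hat; lra. }
  { apply (gen _ _ (15/32) (1/2) (31/200)); try lra; unfold Psi_hat; lra. }
Qed.
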